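(* Let $\mathcal M=(W,W_\bot,\preccurlyeq,\sqsubseteq,V)$ be a forest-like bi-intuitionistic model of finite height $n$, and let $\Sigma$ be a finite set of formulas with $\#\Sigma=s$. Then $\#(W/{\approx_\Sigma})\le 2^{2(n+1)s}_{n+2}$.
   Context: Formulas: $p\mid\bot\mid\varphi\wedge\psi\mid\varphi\vee\psi\mid\varphi\to\psi\mid\Diamond\varphi\mid\Box\varphi$ over a countably infinite set $\mathbb P$. A bi-intuitionistic model $(W,W_\bot,\preccurlyeq,\sqsubseteq,V)$: $\preccurlyeq,\sqsubseteq$ preorders on $W$, $W_\bot$ upward closed under both, $V:\mathbb P\to2^W$ with $V(p)$ $\preccurlyeq$-upward closed and $\supseteq W_\bot$. Satisfaction: $p$ iff $w\in V(p)$; $\bot$ iff $w\in W_\bot$; $\wedge,\vee$ pointwise; $w\models\varphi\to\psi$ iff for all $v\succcurlyeq w$, $v\models\varphi$ implies $v\models\psi$; $w\models\Diamond\varphi$ iff for all $u\succcurlyeq w$ there is $v\sqsupseteq u$ with $v\models\varphi$; $w\models\Box\varphi$ iff $v\models\varphi$ whenever $w\preccurlyeq u\sqsubseteq v$. $w\prec v$ means $w\preccurlyeq v$ and $v\not\preccurlyeq w$. The height of $w$ is the supremum of $n$ such that there is a chain $w=w_0\prec\cdots\prec w_n$; the height of $\mathcal M$ is the supremum of heights of its worlds. $\mathcal M$ is forest-like if for every $w$ the set $\{v:v\preccurlyeq w\}$ is totally ordered by $\preccurlyeq$. For $R\subseteq W\times W$: forward confluent if $w\preccurlyeq w'$, $wRv$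 imply some $v'$ with $v\preccurlyeq v'$, $w'Rv'$; backward confluent if $wRv\preccurlyeq v'$ implies some $w'$ with $w\preccurlyeq w'Rv'$; downward confluent if $w\preccurlyeq vRv'$ implies some $w'$ with $wRw'\preccurlyeq v'$. The $\Sigma$-label of $w$ is $\ell(w)=(\ell^+(w);\ell^\Diamond(w))$ with $\ell^+(w)=\{\varphi\in\Sigma:(\mathcal M,w)\models\varphi\}$, $\ell^\Diamond(w)=\{\varphi\in\Sigma:\forall v\sqsupseteq w,\ (\mathcal M,v)\not\models\varphi\}$. A $\Sigma$-bisimulation is a forward and backward confluent $Z\subseteq W\times W$ with $wZv\Rightarrow\ell(w)=\ell(v)$. A strong $\Sigma$-bisimulation is a $\Sigma$-bisimulation $Z$ such that both $Z$ and $Z^{-1}$ are downward confluent; $\approx_\Sigma$ is the greatest strong $\Sigma$-bisimulation (the union of all), an equivalence relation. Superexponential: $2^x_0=x$ and $2^x_{y+1}=2^{2^x_y}$. *)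

(* Defs.v *)
From Stdlib Require Import List Arith.
Import ListNotations.

Inductive form : Type :=
| Var : nat -> form
| Bot : form
| And : form -> form -> form
| Or : form -> form -> form
| Imp : form -> form -> form
| Dia : form -> form
| Box : form -> form.

Record model : Type := {
  W : Type;
  Wbot : W -> Prop;
  le : W -> W -> Prop;
  sq : W -> W -> Prop;
  V : nat -> W -> Prop;
  le_refl : forall w, le w w;
  le_trans : forall u v w, le u v -> le v w -> le u w;
  sq_refl : forall w, sq w w;
  sq_trans : forall u v w, sq u v -> sq v w -> sq u w;
  Wbot_le : forall w v, Wbot w -> le w v -> Wbot v;
  Wbot_sq : forall w v, Wbot w -> sq w v -> Wbot v;
  V_up : forall p w v, V p w -> le w v -> V p v;
  V_bot : forall p w, Wbot w -> V p w
}.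

Arguments Wbot {m}. Arguments le {m}. Arguments sq {m}. Arguments V {m}.

Fixpoint sat (M : model) (w : W M) (phi : form) : Prop :=
  match phi with
  | Var p => V p w
  | Bot => Wbot w
  | And a b => sat M w a /\ sat M w b
  | Or a b => sat M w a \/ sat M w b
  | Imp a b => forall v, le w v -> sat M v a -> sat M v b
  | Dia a => forall u, le w u -> exists v, sq u v /\ sat M v a
  | Box a => forall u v, le w u -> sq u v -> sat M v a
  end.

Definition lt_w (M : model) (w v : W M) : Prop := le w v /\ ~ le v w.

Definition chain (M : model) (w : W M) (k : nat) (c : nat -> W M) : Prop :=
  c 0 = w /\ forall i, i < k -> lt_w M (c i) (c (S i)).

Definition height_eq (M : model) (n : nat) : Prop :=
  (forall w k c, chain M w k c -> k <= n) /\
  (exists w c, chain M w n c).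

Definition forest_like (M : model) : Prop :=
  forall w u v : W M, le u w -> le v w -> le u v \/ le v u.

Definition label_eq (M : model) (S : list form) (w v : W M) : Prop :=
  forall phi, In phi S ->
    (sat M w phi <-> sat M v phi) /\
    ((forall x, sq w x -> ~ sat M x phi) <-> (forall x, sq v x -> ~ sat M x phi)).

Definition forward_confluent (M : model) (R : W M -> W M -> Prop) : Prop :=
  forall w w' v, le w w' -> R w v -> exists v', le v v' /\ R w' v'.

Definition backward_confluent (M : model) (R : W M -> W M -> Prop) : Prop :=
  forall w v v', R w v -> le v v' -> exists w', le w w' /\ R w' v'.

Definition downward_confluent (M : model) (R : W M -> W M -> Prop) : Prop :=
  forall w v v', le w v -> R v v' -> exists w', R w w' /\ le w' v'.

Definition bisimulation (M : model) (S : list form) (Z : W M -> W M -> Prop) : Prop :=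
  forward_confluent M Z /\ backward_confluent M Z /\
  (forall w v, Z w v -> label_eq M S w v).

Definition strong_bisimulation (M : model) (S : list form) (Z : W M -> W M -> Prop) : Prop :=
  bisimulation M S Z /\ downward_confluent M Z /\
  downward_confluent M (fun w v => Z v w).

Definition approx (M : model) (S : list form) (w v : W M) : Prop :=
  exists Z, strong_bisimulation M S Z /\ Z w v.

Fixpoint sexp (x y : nat) : nat :=
  match y with
  | 0 => x
  | S y' => 2 ^ sexp x y'
  end.

(* #(W / R) <= N : there is a map into {0..N-1} whose fibres lie in single R-classes *)
Definition quotient_card_le (M : model) (R : W M -> W M -> Prop) (N : nat) : Prop :=
  exists f : W M -> nat, (forall w, f w < N) /\ (forall w v, f w = f v -> R w v).

(* Main.v *)
Require Import Defs.
From Stdlib Require Import List Arith Lia Classical ClassicalEpsilon.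
Import ListNotations.

Fixpoint tuples {A} (k : nat) (l : list A) : list (list A) :=
  match k with
  | 0 => [[]]
  | S k => flat_map (fun a => map (cons a) (tuples k l)) l
  end.

Lemma tuples_length {A} k (l : list A) : length (tuples k l) = length l ^ k.
Proof.
  induction k; simpl; auto.
  rewrite (flat_map_constant_length (c := length l ^ k)). lia.
  intros; rewrite length_map; auto.
Qed.

Lemma tuples_in {A} k (l : list A) t : length t = k -> (forall a, In a t -> In a l) -> In t (tuples k l).
Proof.
  revert t; induction k; intros t Ht Hin.
  - destruct t; simpl in *; try lia; auto.
  - destruct t as [|a t]; simpl in *; try lia.
    apply in_flat_map. exists a. split; auto. apply in_map. apply IHk; auto.
Qed.

Lemma map_eq_in {A B} (f g : A -> B) l a : map f l = map g l -> In a l -> f a = g a.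
Proof.
  induction l; simpl; intros H Hin; [contradiction|]. injection H; intros.
  destruct Hin; subst; auto.
Qed.

Lemma lin_pow x : x < 2 ^ x.
Proof. apply Nat.pow_gt_lin_r; lia. Qed.

Lemma sexp_mono j x y : x <= y -> sexp x j <= sexp y j.
Proof. induction j; simpl; intros; auto. apply Nat.pow_le_mono_r; auto. Qed.

Lemma sexp_S j x : sexp x j + 1 <= sexp (x + 1) j.
Proof.
  induction j; simpl. lia.
  assert (2 ^ (sexp x j + 1) <= 2 ^ sexp (x + 1) j) by (apply Nat.pow_le_mono_r; lia).
  rewrite Nat.pow_add_r in H. pose proof (Nat.pow_nonzero 2 (sexp x j)). simpl in H. lia.
Qed.

Definition aa s := s + (s + 2 ^ s).
Fixpoint bb s m := match m with 0 => aa s | S m => aa s + 2 ^ bb s m end.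

Lemma a_le_b s m : aa s <= bb s m.
Proof. destruct m; simpl; lia. Qed.

Lemma two_s s : 1 <= s -> 2 * s <= 2 ^ s.
Proof.
  induction s; intros; [lia|]. destruct s. simpl; lia.
  rewrite Nat.pow_succ_r'. specialize (IHs ltac:(lia)). lia.
Qed.

Lemma claimC s m : 1 <= s -> bb s m + m + 2 <= sexp (2 * (m + 2) * s) (m + 1).
Proof.
  intros Hs. induction m.
  - simpl. unfold aa.
    replace (2 * 2 * s) with (s + 3 * s) by lia. rewrite Nat.pow_add_r.
    assert (2 ^ 3 <= 2 ^ (3 * s)) by (apply Nat.pow_le_mono_r; lia).
    pose proof (two_s s Hs). simpl in H. nia.
  - set (S0 := sexp (2 * (m + 2) * s) (m + 1)) in *.
    assert (HS' : S0 + 1 <= sexp (2 * (S m + 2) * s) (m + 1)).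
    { eapply Nat.le_trans. apply sexp_S. apply sexp_mono. lia. }
    replace (S m + 1) with (S (m + 1)) by lia. simpl sexp.
    assert (H1 : 2 ^ (S0 + 1) <= 2 ^ sexp (2 * (S m + 2) * s) (m + 1)) by (apply Nat.pow_le_mono_r; lia).
    rewrite Nat.pow_add_r in H1. simpl in H1.
    assert (H2 : 2 ^ bb s m <= 2 ^ S0) by (apply Nat.pow_le_mono_r; lia).
    pose proof (lin_pow S0). pose proof (a_le_b s m).
    simpl bb. lia.
Qed.

Lemma final_num s n : 1 <= s ->
  2 ^ bb s n * (2 ^ bb s n + 1) ^ n <= sexp (2 * (n + 1) * s) (n + 2).
Proof.
  intros Hs. destruct n as [|m].
  - rewrite Nat.pow_0_r, Nat.mul_1_r. replace (2 * (0 + 1) * s) with (s + s) by lia.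
    cbn [sexp bb]. apply Nat.pow_le_mono_r; [lia|]. unfold aa. rewrite Nat.pow_add_r.
    pose proof (two_s s Hs). assert (2 ^ 1 <= 2 ^ s) by (apply Nat.pow_le_mono_r; lia).
    simpl in H0. nia.
  - set (X := 2 ^ bb s (S m)).
    assert (HX : X * (X + 1) ^ S m <= (X + 1) ^ (S m + 1)).
    { rewrite Nat.pow_add_r, Nat.pow_1_r. rewrite Nat.mul_comm.
      apply Nat.mul_le_mono_l. lia. }
    eapply Nat.le_trans; [exact HX|].
    assert (HX1 : X + 1 <= 2 ^ (bb s (S m) + 1)).
    { rewrite Nat.pow_add_r, Nat.pow_1_r. unfold X. pose proof (Nat.pow_nonzero 2 (bb s (S m))). lia. }
    eapply Nat.le_trans. apply Nat.pow_le_mono_l. exact HX1.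
    rewrite <- Nat.pow_mul_r.
    pose proof (claimC s m Hs) as HC.
    replace (2 * (m + 2) * s) with (2 * (S m + 1) * s) in HC by lia.
    set (S0 := sexp (2 * (S m + 1) * s) (m + 1)) in *.
    replace (S m + 2) with (S (S (m + 1))) by lia. cbn [sexp]. fold S0.
    apply Nat.pow_le_mono_r; [lia|].
    assert (H2 : 2 ^ (bb s m + 1 + (m + 1)) <= 2 ^ S0) by (apply Nat.pow_le_mono_r; lia).
    assert (H2e : 2 ^ (bb s m + 1 + (m + 1)) = (2 ^ bb s m * 2) * 2 ^ (m + 1)).
    { rewrite !Nat.pow_add_r. rewrite Nat.pow_1_r. lia. }
    assert (H3 : m + 2 <= 2 ^ (m + 1)).
    { pose proof (lin_pow (m + 1)). lia. }
    assert (H4 : bb s (S m) + 1 <= 2 ^ bb s m * 2).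
    { cbn [bb]. pose proof (lin_pow (bb s m)). pose proof (a_le_b s m). lia. }
    replace (S m + 1) with (m + 2) by lia.
    assert (H5 : (bb s (S m) + 1) * (m + 2) <= (2 ^ bb s m * 2) * 2 ^ (m + 1))
      by (apply Nat.mul_le_mono; lia).
    lia.
Qed.

Section S.
Variable M : model.

Definition Ch (x : W M) k := exists c, chain M x k c.
Definition Bnd (x : W M) h := forall j, Ch x j -> j <= h.
Definition ltw := lt_w M.
Definition Cl (x y : W M) := le x y /\ le y x.
Definition Imm (x z : W M) := ltw x z /\ ~ exists y, ltw x y /\ ltw y z.

Lemma Ch0 x : Ch x 0.
Proof. exists (fun _ => x). split; auto. intros; lia. Qed.

Lemma ChS x y j : ltw x y -> Ch y j -> Ch x (S j).
Proof.
  intros H [c [H0 Hc]].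
  exists (fun i => match i with 0 => x | S i => c i end). split; auto.
  intros [|i] Hi; simpl.
  - subst; exact H.
  - apply Hc; lia.
Qed.

Lemma ChS_inv x j : Ch x (S j) -> exists y, ltw x y /\ Ch y j.
Proof.
  intros [c [H0 Hc]]. exists (c 1). split.
  - subst. apply Hc; lia.
  - exists (fun i => c (S i)). split; auto. intros; apply Hc; lia.
Qed.

Lemma ltw_le_trans a b c : le a b -> ltw b c -> ltw a c.
Proof.
  intros H [H1 H2]. split. eapply le_trans; eauto.
  intro H3. apply H2. eapply le_trans; eauto.
Qed.

Lemma le_ltw_trans a b c : ltw a b -> le b c -> ltw a c.
Proof.
  intros [H1 H2] H. split. eapply le_trans; eauto.
  intro H3. apply H2. eapply le_trans; eauto.
Qed.

Lemma ltw_trans a b c : ltw a b -> ltw b c -> ltw a c.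
Proof. intros H1 [H2 _]. eapply le_ltw_trans; eauto. Qed.

Lemma ChLe a b j : le a b -> Ch b j -> Ch a j.
Proof.
  intros H Hb. destruct j. apply Ch0.
  destruct (ChS_inv _ _ Hb) as [y [Hy Hc]].
  apply ChS with y; auto. eapply ltw_le_trans; eauto.
Qed.

Lemma ChDown x k j : Ch x k -> j <= k -> Ch x j.
Proof.
  intros [c [H0 Hc]] Hj. exists c. split; auto. intros; apply Hc; lia.
Qed.

Lemma Bnd_lt x z k : ltw x z -> Bnd x (S k) -> Bnd z k.
Proof. intros H Hb j Hj. specialize (Hb _ (ChS _ _ _ H Hj)). lia. Qed.

Lemma Bnd0_nolt x z : Bnd x 0 -> ~ ltw x z.
Proof. intros Hb H. specialize (Hb 1 (ChS _ _ _ H (Ch0 _))). lia. Qed.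

Lemma Bnd_lt_pos x z h : ltw x z -> Bnd x h -> exists h', h = S h'.
Proof. intros H Hb. destruct h. exfalso; eapply Bnd0_nolt; eauto. eauto. Qed.

Lemma persist w v phi : sat M w phi -> le w v -> sat M v phi.
Proof.
  revert w v; induction phi; simpl; intros w v H Hle.
  - eapply V_up; eauto.
  - eapply Wbot_le; eauto.
  - destruct H; split; eauto.
  - destruct H; [left|right]; eauto.
  - intros u Hu. apply H. eapply le_trans; eauto.
  - intros u Hu. apply H. eapply le_trans; eauto.
  - intros u u' Hu. apply H. eapply le_trans; eauto.
Qed.

Variable n : nat.
Hypothesis Hbnd : forall w, Bnd w n.
Hypothesis Hforest : forest_like M.

Lemma ImmPath w w' : ltw w w' -> exists x, Imm w x /\ le x w'.
Proof.
  intros H. apply NNPP. intro Hn.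
  assert (forall m, exists y, ltw w y /\ le y w' /\ Ch y m).
  { induction m.
    - exists w'. split; auto. split. apply le_refl. apply Ch0.
    - destruct IHm as [y [H1 [H2 H3]]].
      assert (H4 : exists y', ltw w y' /\ ltw y' y).
      { apply NNPP. intro H4. apply Hn. exists y. split; auto. split; auto. }
      destruct H4 as [y' [H5 H6]]. exists y'. split; auto. split.
      + eapply le_trans; eauto. apply H6.
      + eapply ChS; eauto. }
  destruct (H0 n) as [y [H1 [_ H3]]].
  specialize (Hbnd w (S n) (ChS _ _ _ H1 H3)). lia.
Qed.

Lemma ImmPred w x u : Imm w x -> ltw u x -> ltw u w \/ Cl u w.
Proof.
  intros [Hwx Hno] Hux.
  destruct (Hforest x u w (proj1 Hux) (proj1 Hwx)) as [H|H].
  - destruct (classic (le w u)). right; split; auto. left; split; auto.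
  - destruct (classic (le u w)). right; split; auto.
    exfalso. apply Hno. exists u. split; auto. split; auto.
Qed.


Variable Sg : list form.

Definition setEq (Sr E : W M -> W M -> Prop) x y :=
  (forall z, Sr x z -> exists z', Sr y z' /\ E z z') /\
  (forall z', Sr y z' -> exists z, Sr x z /\ E z z').

Definition dia (x : W M) phi := forall z, sq x z -> ~ sat M z phi.
Definition Lp (x y : W M) := forall phi, In phi Sg -> (sat M x phi <-> sat M y phi).
Definition Ld (x y : W M) := forall phi, In phi Sg -> (dia x phi <-> dia y phi).
Definition K x y := Lp x y /\ Ld x y /\ setEq Cl Ld x y.

Fixpoint E (k : nat) : W M -> W M -> Prop :=
  match k with
  | 0 => fun _ _ => True
  | S k => fun x y => K x y /\ setEq Imm (E k) x y
  end.

Definition PD := setEq (fun x u => ltw u x) (E (S n)).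
Definition Z x y := E (S n) x y /\ PD x y.

Definition Equiv (R : W M -> W M -> Prop) :=
  (forall x, R x x) /\ (forall x y, R x y -> R y x) /\
  (forall x y z, R x y -> R y z -> R x z).

Lemma setEq_equiv Sr R : Equiv R -> Equiv (setEq Sr R).
Proof.
  intros [Hr [Hs Ht]]. split; [|split].
  - intros x; split; intros z Hz; exists z; auto.
  - intros x y [H1 H2]; split; intros z Hz.
    + destruct (H2 z Hz) as [z' [? ?]]; eauto.
    + destruct (H1 z Hz) as [z' [? ?]]; eauto.
  - intros x y z [H1 H2] [H3 H4]; split; intros a Ha.
    + destruct (H1 a Ha) as [b [Hb1 Hb2]]. destruct (H3 b Hb1) as [c [? ?]]. eauto.
    + destruct (H4 a Ha) as [b [Hb1 Hb2]]. destruct (H2 b Hb1) as [c [? ?]]. eauto.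
Qed.

Lemma Lp_equiv : Equiv Lp.
Proof.
  split; [|split]; unfold Lp; intros.
  - tauto.
  - rewrite H; tauto.
  - rewrite H, H0; tauto.
Qed.

Lemma Ld_equiv : Equiv Ld.
Proof.
  split; [|split]; unfold Ld; intros.
  - tauto.
  - rewrite H; tauto.
  - rewrite H, H0; tauto.
Qed.

Lemma and_equiv R1 R2 : Equiv R1 -> Equiv R2 -> Equiv (fun x y => R1 x y /\ R2 x y).
Proof.
  intros [a [b c]] [d [e f]]. split; [|split]; intros; intuition eauto.
Qed.

Lemma K_equiv : Equiv K.
Proof.
  unfold K. apply and_equiv. apply Lp_equiv.
  apply and_equiv. apply Ld_equiv. apply setEq_equiv, Ld_equiv.
Qed.

Lemma E_equiv k : Equiv (E k).
Proof.
  induction k; simpl.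
  - split; [|split]; auto.
  - apply and_equiv. apply K_equiv. apply setEq_equiv; auto.
Qed.

Lemma Z_equiv : Equiv Z.
Proof. apply and_equiv. apply E_equiv. apply setEq_equiv, E_equiv. Qed.

Lemma Cl_sym x y : Cl x y -> Cl y x.
Proof. unfold Cl; tauto. Qed.

Lemma Cl_trans x y z : Cl x y -> Cl y z -> Cl x z.
Proof. unfold Cl; intros [] []; split; eapply le_trans; eauto. Qed.

Lemma setEq_transfer Sr R x y v v' :
  (forall z, Sr x z <-> Sr v z) -> (forall z, Sr y z <-> Sr v' z) ->
  setEq Sr R v v' -> setEq Sr R x y.
Proof.
  intros H1 H2 [H3 H4]; split; intros z Hz.
  - apply H1 in Hz. destruct (H3 z Hz) as [z' [? ?]]. exists z'. rewrite H2. auto.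
  - apply H2 in Hz. destruct (H4 z Hz) as [z' [? ?]]. exists z'. rewrite H1. auto.
Qed.

Lemma Cl_ltw_l x v z : Cl x v -> (ltw x z <-> ltw v z).
Proof.
  intros [H1 H2]; split; intro H. eapply ltw_le_trans; eauto. eapply ltw_le_trans; eauto.
Qed.

Lemma Cl_ltw_r x v z : Cl x v -> (ltw z x <-> ltw z v).
Proof.
  intros [H1 H2]; split; intro H. eapply le_ltw_trans; eauto. eapply le_ltw_trans; eauto.
Qed.

Lemma Cl_Imm x v z : Cl x v -> (Imm x z <-> Imm v z).
Proof.
  intros H. unfold Imm.
  split; intros [H1 H2]; split.
  - rewrite <- (Cl_ltw_l _ _ _ H); auto.
  - intros [y [H3 H4]]; apply H2; exists y; split; auto. rewrite (Cl_ltw_l _ _ _ H); auto.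
  - rewrite (Cl_ltw_l _ _ _ H); auto.
  - intros [y [H3 H4]]; apply H2; exists y; split; auto. rewrite <- (Cl_ltw_l _ _ _ H); auto.
Qed.

Lemma Cl_Cl x v z : Cl x v -> (Cl x z <-> Cl v z).
Proof.
  intros H; split; intro H'. eapply Cl_trans; eauto using Cl_sym. eapply Cl_trans; eauto.
Qed.

Lemma Lp_Cl x v : Cl x v -> Lp x v.
Proof. intros [H1 H2] phi _; split; intro; eapply persist; eauto. Qed.

Lemma CT j x y v v' : Cl x v -> Cl y v' -> Ld x y -> E (S j) v v' -> E (S j) x y.
Proof.
  intros H1 H2 H3 [[H4 [H5 H6]] H7]. split; [split; [|split]|].
  - destruct Lp_equiv as [_ [Ls Lt]].
    eapply Lt. apply Lp_Cl; eauto. eapply Lt. eauto. apply Ls, Lp_Cl; auto.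
  - auto.
  - eapply setEq_transfer; [| |exact H6]; intro z; apply Cl_Cl; auto.
  - eapply setEq_transfer; [| |exact H7]; intro z; apply Cl_Imm; auto.
Qed.

Lemma PD_transfer x y v v' : Cl x v -> Cl y v' -> PD v v' -> PD x y.
Proof.
  intros H1 H2 H3. eapply setEq_transfer; [| |exact H3]; intro z; apply Cl_ltw_r; auto.
Qed.

Lemma stab k : forall x y, Bnd x k -> E (S k) x y -> E (S (S k)) x y /\ Bnd y k.
Proof.
  induction k; intros x y Hb [HK [H1 H2]].
  - assert (Hy : forall z, ~ ltw y z).
    { intros z Hz. destruct (ImmPath _ _ Hz) as [z' [Hz' _]].
      destruct (H2 z' Hz') as [zz [Hzz _]]. eapply Bnd0_nolt; eauto. apply Hzz. }
    split.
    + split; auto. split; intros z Hz.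
      * exfalso; eapply Bnd0_nolt; eauto. apply Hz.
      * exfalso; eapply Hy; apply Hz.
    + intros [|j] Hj; auto. destruct (ChS_inv _ _ Hj) as [z [Hz _]]. exfalso; eapply Hy; eauto.
  - assert (HA : forall z', Imm y z' -> exists z, Imm x z /\ E (S (S k)) z z' /\ Bnd z' k).
    { intros z' Hz'. destruct (H2 z' Hz') as [z [Hz HE]].
      assert (Bnd z k) by (eapply Bnd_lt; eauto; apply Hz).
      destruct (IHk _ _ H HE). eauto. }
    split.
    + split; auto. split.
      * intros z Hz. destruct (H1 z Hz) as [z' [Hz' HE]]. exists z'. split; auto.
        apply IHk; auto. eapply Bnd_lt; eauto. apply Hz.
      * intros z' Hz'. destruct (HA z' Hz') as [z [? [? ?]]]; eauto.
    + intros [|j] Hj; [lia|]. destruct (ChS_inv _ _ Hj) as [t [Ht Hc]].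
      destruct (ImmPath _ _ Ht) as [z' [Hz' Hle]].
      destruct (HA z' Hz') as [_ [_ [_ Hb']]].
      specialize (Hb' j (ChLe _ _ _ Hle Hc)). lia.
Qed.

Lemma ChE k : forall j x y, k <= j -> E j x y -> Ch x k -> Ch y k.
Proof.
  induction k; intros j x y Hkj HE Hc. apply Ch0.
  destruct j as [|j]; [lia|]. destruct HE as [_ [H1 _]].
  destruct (ChS_inv _ _ Hc) as [t [Ht Hct]].
  destruct (ImmPath _ _ Ht) as [z [Hz Hle]].
  destruct (H1 z Hz) as [z' [Hz' HE]].
  apply ChS with z'. apply Hz'. eapply IHk; [|eauto|]. lia. eapply ChLe; eauto.
Qed.


Definition hgt x := epsilon (inhabits 0) (fun k => Ch x k /\ ~ Ch x (S k)).

Lemma H_spec x : Ch x (hgt x) /\ ~ Ch x (S (hgt x)).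
Proof.
  apply (epsilon_spec (inhabits 0) (fun k => Ch x k /\ ~ Ch x (S k))).
  apply NNPP; intro Hn.
  assert (HH : forall k, Ch x k).
  { induction k. apply Ch0. apply NNPP; intro; apply Hn; eauto. }
  specialize (Hbnd x (S n) (HH (S n))). lia.
Qed.

Lemma H_iff x k : Ch x k <-> k <= hgt x.
Proof.
  destruct (H_spec x) as [H1 H2]. split; intro H.
  - destruct (le_lt_dec k (hgt x)); auto. exfalso; apply H2. eapply ChDown; eauto.
  - eapply ChDown; eauto.
Qed.

Lemma H_bnd x : hgt x <= n.
Proof. apply (Hbnd x), H_spec. Qed.

Lemma H_lt u v : ltw u v -> hgt v < hgt u.
Proof. intros Hl. apply H_iff. eapply ChS; eauto. apply H_spec. Qed.

Lemma H_le u v : le u v -> hgt v <= hgt u.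
Proof. intros Hl. apply H_iff. eapply ChLe; eauto. apply H_spec. Qed.

Lemma H_E x y : E (S n) x y -> hgt x = hgt y.
Proof.
  intros HE. destruct (E_equiv (S n)) as [_ [Es _]].
  assert (hgt x <= hgt y).
  { apply H_iff. apply (ChE (hgt x) (S n) x y). pose proof (H_bnd x); lia. auto. apply H_spec. }
  assert (hgt y <= hgt x).
  { apply H_iff. apply (ChE (hgt y) (S n) y x). pose proof (H_bnd y); lia. auto. apply H_spec. }
  lia.
Qed.

Lemma H_Cl u v w : le u w -> le v w -> hgt u = hgt v -> Cl u v.
Proof.
  intros H1 H2 H3. destruct (Hforest w u v H1 H2) as [H4|H4].
  - destruct (classic (le v u)). split; auto.
    assert (ltw u v) by (split; auto). apply H_lt in H0. lia.
  - destruct (classic (le u v)). split; auto.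
    assert (ltw v u) by (split; auto). apply H_lt in H0. lia.
Qed.

Lemma Imm_step w x v : Imm w x -> Z w v -> exists v1, Imm v v1 /\ Z x v1.
Proof.
  intros Hwx [HE HP].
  destruct (Bnd_lt_pos _ _ _ (proj1 Hwx) (Hbnd w)) as [n' Hn].
  pose proof HE as HEwv.
  rewrite Hn in HE.
  destruct HE as [HK [H1 H2]].
  destruct (H1 x Hwx) as [v1 [Hv1 HE1]].
  assert (Bnd x n') by (eapply Bnd_lt; [apply Hwx|]; rewrite <- Hn; auto).
  destruct (stab _ _ _ H HE1) as [HE2 _]. rewrite <- Hn in HE2.
  exists v1. split; auto. split; auto.
  destruct HP as [P1 P2]. destruct HK as [_ [_ [C1 C2]]].
  split.
  - intros u Hu. destruct (ImmPred _ _ _ Hwx Hu) as [Hu'|Hu'].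
    + destruct (P1 u Hu') as [u' [Hu1 Hu2]]. exists u'. split; auto.
      exact (ltw_trans _ v _ Hu1 (proj1 Hv1)).
    + destruct (C1 u (Cl_sym _ _ Hu')) as [u' [Hu1 Hu2]]. exists u'. split.
      * apply (Cl_ltw_l _ _ _ (Cl_sym _ _ Hu1)). apply Hv1.
      * exact (CT _ u u' w v Hu' (Cl_sym _ _ Hu1) Hu2 HEwv).
  - intros u' Hu'. destruct (ImmPred _ _ _ Hv1 Hu') as [Hu|Hu].
    + destruct (P2 u' Hu) as [u [Hu1 Hu2]]. exists u. split; auto.
      exact (ltw_trans _ w _ Hu1 (proj1 Hwx)).
    + destruct (C2 u' (Cl_sym _ _ Hu)) as [u [Hu1 Hu2]]. exists u. split.
      * apply (Cl_ltw_l _ _ _ (Cl_sym _ _ Hu1)). apply Hwx.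
      * exact (CT _ u u' w v (Cl_sym _ _ Hu1) Hu Hu2 HEwv).
Qed.

Lemma Cl_step w w' v : Cl w w' -> Z w v -> exists v', Cl v v' /\ Z w' v'.
Proof.
  intros Hc [HE HP].
  assert (HK : K w v) by (destruct n; apply HE).
  destruct HK as [_ [_ [C1 _]]].
  destruct (C1 w' Hc) as [v' [Hv' HL]]. exists v'. split; auto. split.
  - eapply CT; eauto; apply Cl_sym; auto.
  - eapply PD_transfer; eauto; apply Cl_sym; auto.
Qed.

Lemma FC h : forall w w' v, Bnd w h -> le w w' -> Z w v -> exists v', le v v' /\ Z w' v'.
Proof.
  induction h; intros w w' v Hb Hle HZ.
  - destruct (classic (le w' w)).
    + destruct (Cl_step w w' v) as [v' [[? ?] ?]]; eauto. split; auto.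
    + exfalso. eapply Bnd0_nolt; eauto. split; eauto.
  - destruct (classic (le w' w)).
    + destruct (Cl_step w w' v) as [v' [[? ?] ?]]; eauto. split; auto.
    + destruct (ImmPath w w') as [x [Hx Hxw]]. split; auto.
      destruct (Imm_step _ _ _ Hx HZ) as [v1 [Hv1 HZ1]].
      destruct (IHh x w' v1) as [v' [? ?]]; auto.
      eapply Bnd_lt; eauto. apply Hx.
      exists v'. split; auto. eapply le_trans; eauto. apply Hv1.
Qed.

Lemma DC w v v' : le w v -> Z v v' -> exists w', Z w w' /\ le w' v'.
Proof.
  intros Hle HZ. destruct (classic (le v w)).
  - destruct (Cl_step v w v') as [w' [Hc HZ']]; auto. split; auto.
    exists w'. split. exact HZ'. apply Hc.
  - assert (Hl : ltw w v) by (split; auto).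
    destruct HZ as [HE [P1 P2]].
    destruct (P1 w Hl) as [w' [Hw' HEw]].
    exists w'. split; [|apply Hw'].
    split; auto.
    pose proof (H_E _ _ HEw) as Hh.
    split.
    + intros u Hu. destruct (P1 u (ltw_trans _ _ _ Hu Hl)) as [u' [Hu1 Hu2]].
      exists u'. split; auto.
      pose proof (H_E _ _ Hu2) as Hh2. pose proof (H_lt _ _ Hu).
      destruct (Hforest v' u' w' (proj1 Hu1) (proj1 Hw')) as [H3|H3].
      * split; auto. intro H4. apply H_le in H4. lia.
      * apply H_le in H3. lia.
    + intros u' Hu'. destruct (P2 u' (ltw_trans _ _ _ Hu' Hw')) as [u [Hu1 Hu2]].
      exists u. split; auto.
      pose proof (H_E _ _ Hu2) as Hh2. pose proof (H_lt _ _ Hu').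
      destruct (Hforest v u w (proj1 Hu1) (proj1 Hl)) as [H3|H3].
      * split; auto. intro H4. apply H_le in H4. lia.
      * apply H_le in H3. lia.
Qed.

Lemma Z_strong : strong_bisimulation M Sg Z.
Proof.
  destruct Z_equiv as [Zr [Zs Zt]].
  split; [split; [|split]|split].
  - intros w w' v Hle HZ. eapply FC; eauto.
  - intros w v v' HZ Hle. destruct (FC n v v' w) as [w' [? ?]]; eauto.
  - intros w v [HE _] phi Hphi.
    assert (HK : K w v) by (destruct n; apply HE).
    destruct HK as [H1 [H2 _]]. split. apply H1; auto. apply H2; auto.
  - intros w v v' Hle HZ. eapply DC; eauto.
  - intros w v v' Hle HZ. destruct (DC w v v') as [w' [? ?]]; eauto.
Qed.


Definition cnt (P : W M -> Prop) (R : W M -> W M -> Prop) N :=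
  exists l, length l <= N /\ forall w, P w -> exists r, In r l /\ P r /\ R w r.

Lemma Sig {A} (P : W M -> Prop) R (sg : W M -> A) (L : list A) N :
  length L <= N -> (forall w, P w -> In (sg w) L) ->
  (forall x y, P x -> P y -> sg x = sg y -> R x y) -> cnt P R N.
Proof.
  intros HL Hin HR. destruct (classic (exists w, P w)) as [[w0 Hw0]|Hno].
  - exists (map (fun a => epsilon (inhabits w0) (fun w => P w /\ sg w = a)) L).
    rewrite length_map. split; auto. intros w Hw.
    eexists. split. apply in_map. apply (Hin w Hw).
    assert (Hex : exists w', P w' /\ sg w' = sg w) by (exists w; auto).
    destruct (epsilon_spec (inhabits w0) (fun w' => P w' /\ sg w' = sg w) Hex) as [H1 H2].
    split; [auto | apply HR; auto].
  - exists []. split. simpl; lia. intros w Hw. exfalso; eauto.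
Qed.

Definition rep (l : list (W M)) (P : W M -> Prop) R (w : W M) :=
  epsilon (inhabits w) (fun r => In r l /\ P r /\ R w r).

Lemma rep_spec l P R w : (exists r, In r l /\ P r /\ R w r) ->
  In (rep l P R w) l /\ P (rep l P R w) /\ R w (rep l P R w).
Proof. intros. apply (epsilon_spec (inhabits w) (fun r => In r l /\ P r /\ R w r)); auto. Qed.

Lemma rep_eq (R : W M -> W M -> Prop) l P x y : Equiv R ->
  (exists r, In r l /\ P r /\ R x r) -> (exists r, In r l /\ P r /\ R y r) ->
  rep l P R x = rep l P R y -> R x y.
Proof.
  intros [_ [Rs Rt]] Hx Hy He.
  destruct (rep_spec _ _ _ _ Hx) as [_ [_ H1]]. destruct (rep_spec _ _ _ _ Hy) as [_ [_ H2]].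
  rewrite He in H1. eauto.
Qed.

Lemma cnt_prod P R1 R2 N1 N2 : Equiv R1 -> Equiv R2 -> cnt P R1 N1 -> cnt P R2 N2 ->
  cnt P (fun x y => R1 x y /\ R2 x y) (N1 * N2).
Proof.
  intros E1 E2 [l1 [Hl1 C1]] [l2 [Hl2 C2]].
  apply (Sig P _ (fun w => (rep l1 P R1 w, rep l2 P R2 w)) (list_prod l1 l2)).
  - rewrite length_prod. apply Nat.mul_le_mono; auto.
  - intros w Hw. apply in_prod; apply rep_spec; auto.
  - intros x y Hx Hy He. injection He; intros. split; eapply rep_eq; eauto.
Qed.

Lemma cnt_mono P (R R' : W M -> W M -> Prop) N N' : cnt P R N ->
  (forall x y, P x -> P y -> R x y -> R' x y) -> N <= N' -> cnt P R' N'.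
Proof.
  intros [l [Hl C]] HR HN. exists l. split. lia.
  intros w Hw. destruct (C w Hw) as [r [? [? ?]]]. exists r; auto.
Qed.

Definition bdec (P : Prop) : bool := if excluded_middle_informative P then true else false.

Lemma bdec_eq P Q : bdec P = bdec Q -> (P <-> Q).
Proof.
  unfold bdec. destruct (excluded_middle_informative P), (excluded_middle_informative Q);
  intuition congruence.
Qed.

Lemma bdec_true P : P -> bdec P = true.
Proof. unfold bdec; destruct (excluded_middle_informative P); tauto. Qed.

Lemma cnt_pred P (F : W M -> form -> Prop) :
  cnt P (fun x y => forall phi, In phi Sg -> (F x phi <-> F y phi)) (2 ^ length Sg).
Proof.
  apply (Sig P _ (fun w => map (fun phi => bdec (F w phi)) Sg) (tuples (length Sg) [true; false])).
  - rewrite tuples_length. simpl. lia.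
  - intros w _. apply tuples_in. apply length_map. intros a _. destruct a; simpl; auto.
  - intros x y _ _ He phi Hphi. apply bdec_eq. exact (map_eq_in (fun phi => bdec (F x phi)) (fun phi => bdec (F y phi)) _ _ He Hphi).
Qed.

Lemma cnt_setEq P Q Sr R N : Equiv R -> cnt Q R N ->
  (forall x z, P x -> Sr x z -> Q z) -> cnt P (setEq Sr R) (2 ^ N).
Proof.
  intros [Rr [Rs Rt]] [l [Hl C]] HPQ.
  apply (Sig P _ (fun w => map (fun r => bdec (exists z, Sr w z /\ R z r)) l) (tuples (length l) [true; false])).
  - rewrite tuples_length. simpl. apply Nat.pow_le_mono_r; lia.
  - intros w _. apply tuples_in. apply length_map. intros a _. destruct a; simpl; auto.
  - intros x y Hx Hy He.
    assert (Hb : forall r, In r l -> ((exists z, Sr x z /\ R z r) <-> (exists z, Sr y z /\ R z r))).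
    { intros r Hr. apply bdec_eq. exact (map_eq_in (fun r => bdec (exists z, Sr x z /\ R z r)) (fun r => bdec (exists z, Sr y z /\ R z r)) _ _ He Hr). }
    split.
    + intros z Hz. destruct (C z (HPQ _ _ Hx Hz)) as [r [Hr [_ Hzr]]].
      destruct (proj1 (Hb r Hr) (ex_intro _ z (conj Hz Hzr))) as [z' [Hz' Hz'r]].
      exists z'. split; eauto.
    + intros z Hz. destruct (C z (HPQ _ _ Hy Hz)) as [r [Hr [_ Hzr]]].
      destruct (proj2 (Hb r Hr) (ex_intro _ z (conj Hz Hzr))) as [z' [Hz' Hz'r]].
      exists z'. split; eauto.
Qed.

Lemma cnt_K P : cnt P K (2 ^ aa (length Sg)).
Proof.
  assert (H1 : cnt P Lp (2 ^ length Sg)) by apply (cnt_pred P (fun x phi => sat M x phi)).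
  assert (H2 : cnt P Ld (2 ^ length Sg)) by apply (cnt_pred P dia).
  assert (H3 : cnt (fun _ => True) Ld (2 ^ length Sg)) by apply (cnt_pred _ dia).
  assert (H4 : cnt P (setEq Cl Ld) (2 ^ 2 ^ length Sg)).
  { apply (cnt_setEq P (fun _ => True)). apply Ld_equiv. exact H3. auto. }
  assert (H5 := cnt_prod _ _ _ _ _ Ld_equiv (setEq_equiv Cl _ Ld_equiv) H2 H4).
  assert (H6 := cnt_prod _ _ _ _ _ Lp_equiv (and_equiv _ _ Ld_equiv (setEq_equiv Cl _ Ld_equiv)) H1 H5).
  eapply cnt_mono. exact H6. intros x y _ _ H; exact H.
  unfold aa. rewrite !Nat.pow_add_r. lia.
Qed.

Lemma cnt_level h : cnt (fun w => Bnd w h) (E (S h)) (2 ^ bb (length Sg) h).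
Proof.
  induction h.
  - eapply cnt_mono. apply cnt_K. 2: simpl; lia.
    intros x y Hx Hy HK. split; auto. split; intros z Hz; exfalso.
    exact (Bnd0_nolt _ z Hx (proj1 Hz)). exact (Bnd0_nolt _ z Hy (proj1 Hz)).
  - assert (H1 : cnt (fun w => Bnd w (S h)) (setEq Imm (E (S h))) (2 ^ 2 ^ bb (length Sg) h)).
    { apply (cnt_setEq _ (fun w => Bnd w h)). apply E_equiv. exact IHh.
      intros x z Hx Hz. exact (Bnd_lt _ _ _ (proj1 Hz) Hx). }
    assert (H2 := cnt_prod _ _ _ _ _ K_equiv (setEq_equiv Imm _ (E_equiv (S h))) (cnt_K _) H1).
    eapply cnt_mono. exact H2. intros x y _ _ H; exact H.
    cbn [bb]. rewrite Nat.pow_add_r. lia.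
Qed.

Lemma cnt_PD : cnt (fun _ => True) PD ((2 ^ bb (length Sg) n + 1) ^ n).
Proof.
  destruct (cnt_mono _ _ _ _ _ (cnt_level n) (fun x y _ _ H => H) (le_n _)) as [lE [HlE CE]].
  set (f := fun w h => if excluded_middle_informative (exists u, ltw u w /\ hgt u = h)
             then Some (rep lE (fun w => Bnd w n) (E (S n)) (epsilon (inhabits w) (fun u => ltw u w /\ hgt u = h)))
             else None).
  apply (Sig _ _ (fun w => map (f w) (seq 1 n)) (tuples n (None :: map Some lE))).
  - rewrite tuples_length. simpl. rewrite length_map. apply Nat.pow_le_mono_l. lia.
  - intros w _. apply tuples_in. rewrite length_map, length_seq; auto.
    intros a Ha. apply in_map_iff in Ha. destruct Ha as [h [Ha _]]. subst a. unfold f.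
    destruct (excluded_middle_informative _); simpl; auto. right. apply in_map. apply rep_spec. apply CE. auto.
  - assert (Half : forall x y, map (f x) (seq 1 n) = map (f y) (seq 1 n) ->
                   forall u, ltw u x -> exists u', ltw u' y /\ E (S n) u u').
    { intros x y He u Hu.
      assert (Hh : In (hgt u) (seq 1 n)).
      { apply in_seq. pose proof (H_bnd u). pose proof (H_lt _ _ Hu). lia. }
      pose proof (map_eq_in _ _ _ _ He Hh) as Hf. unfold f in Hf.
      destruct (excluded_middle_informative (exists u0, ltw u0 x /\ hgt u0 = hgt u)) as [ex|nex];
        [|exfalso; eauto].
      destruct (excluded_middle_informative (exists u0, ltw u0 y /\ hgt u0 = hgt u)) as [ey|ney];
        [|discriminate].
      injection Hf as Hf.
      set (ux := epsilon (inhabits x) (fun u0 => ltw u0 x /\ hgt u0 = hgt u)) in *.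
      set (uy := epsilon (inhabits y) (fun u0 => ltw u0 y /\ hgt u0 = hgt u)) in *.
      destruct (epsilon_spec (inhabits x) (fun u0 => ltw u0 x /\ hgt u0 = hgt u) ex) as [Hux1 Hux2].
      destruct (epsilon_spec (inhabits y) (fun u0 => ltw u0 y /\ hgt u0 = hgt u) ey) as [Huy1 Huy2].
      fold ux in Hux1, Hux2. fold uy in Huy1, Huy2.
      assert (HE : E (S n) ux uy) by (eapply rep_eq; [apply E_equiv| apply CE; auto | apply CE; auto | exact Hf]).
      assert (Hc : Cl u ux) by (apply (H_Cl _ _ x); [apply Hu|apply Hux1|congruence]).
      assert (HK : K ux uy) by (destruct n; apply HE).
      destruct HK as [_ [_ [C1 _]]].
      destruct (C1 u (Cl_sym _ _ Hc)) as [u' [Hu' HL]].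
      exists u'. split.
      - apply (proj2 (Cl_ltw_l _ _ y (Cl_sym _ _ Hu'))). exact Huy1.
      - exact (CT _ u u' ux uy Hc (Cl_sym _ _ Hu') HL HE). }
    intros x y _ _ He. split.
    + apply Half; auto.
    + intros u' Hu'. destruct (Half y x (eq_sym He) u' Hu') as [u [Hu HE]].
      exists u. split; auto. apply E_equiv; auto.
Qed.

Lemma cnt_Z : cnt (fun _ => True) Z (2 ^ bb (length Sg) n * (2 ^ bb (length Sg) n + 1) ^ n).
Proof.
  assert (H1 : cnt (fun _ => True) (E (S n)) (2 ^ bb (length Sg) n)).
  { destruct (cnt_level n) as [l [Hl C]]. exists l. split; auto.
    intros w _. destruct (C w (Hbnd w)) as [r [? [_ ?]]]. exists r; auto. }
  exact (cnt_prod _ _ _ _ _ (E_equiv _) (setEq_equiv _ _ (E_equiv _)) H1 cnt_PD).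
Qed.

End S.

Theorem mainTheorem13 (M : model) (n : nat) (Sigma : list form) (s : nat) :
  forest_like M -> height_eq M n -> NoDup Sigma -> length Sigma = s ->
  quotient_card_le M (approx M Sigma) (sexp (2 * (n + 1) * s) (n + 2)).
Proof.
  intros Hf [Hh _] _ Hs.
  assert (Hbnd : forall w, Bnd M w n).
  { intros w j [c Hc]. eapply Hh; eauto. }
  destruct s as [|s'].
  - destruct Sigma; simpl in Hs; try discriminate.
    exists (fun _ => 0). split.
    + intros _. replace (n + 2) with (S (n + 1)) by lia. simpl. apply Nat.neq_0_lt_0, Nat.pow_nonzero; lia.
    + intros w v _. exists (fun _ _ => True). split; auto.
      split; [split; [|split]|split].
      * intros a b c _ _. exists c. split; auto. apply le_refl.
      * intros a b c _ _. exists a. split; auto. apply le_refl.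
      * intros a b _ phi Hphi. destruct Hphi.
      * intros a b c _ _. exists c. split; auto. apply le_refl.
      * intros a b c _ _. exists c. split; auto. apply le_refl.
  - destruct (cnt_Z M n Hbnd Hf Sigma) as [l [Hl C]].
    assert (Hex : forall w, exists i, i < length l /\ Z M n Sigma w (nth i l w)).
    { intros w. destruct (C w I) as [r [Hr [_ HZ]]].
      destruct (In_nth l r w Hr) as [i [Hi Hn]]. exists i. split; auto. congruence. }
    exists (fun w => proj1_sig (constructive_indefinite_description _ (Hex w))).
    split.
    + intros w. destruct (constructive_indefinite_description _ (Hex w)) as [i [Hi Hi2]]. cbn [proj1_sig].
      pose proof (final_num (S s') n ltac:(lia)). rewrite Hs in Hl. lia.
    + intros w v. destruct (constructive_indefinite_description _ (Hex w)) as [i [Hi Hw]].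
      destruct (constructive_indefinite_description _ (Hex v)) as [j [Hj Hv]]. simpl. intros <-.
      rewrite (@nth_indep _ l i w v Hi) in Hw.
      destruct (Z_equiv M n Sigma) as [_ [Zs Zt]].
      exists (Z M n Sigma). split. apply Z_strong; auto. eauto.
Qed.
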